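(* Let $\Gamma$ be a finite group, $\theta:\Gamma\to O(\mathbb{R}^d)$ a point group, and let $(G,p)$ be a bar-joint framework with $V(G)=\Gamma\times\hat V$ that is $\theta$-symmetric, with quotient $\Gamma$-gain graph $G/\Gamma$ (so $G$ is the lift of $G/\Gamma$), and with $p\in\mathcal{C}_\theta(V)$. If $(G,p)$ is universally rigid, then the problem (P$^\Gamma$): find $X\in(\mathcal{L}^V)^\Gamma_+$ with $\langle X,F_{(u,v,\gamma)}\rangle=\langle P^\top P,F_{(u,v,\gamma)}\rangle$ for all $(u,v,\gamma)\in E(G/\Gamma)$, has the unique solution $P^\top P$.
   Context: A bar-joint framework $(G,p)$ is a tensegrity with all edges bars: $G=(V,E)$ finite simple graph, $p:V\to\mathbb{R}^d$; it is universally rigid if for every $d'\geq d$ every $q:V\to\mathbb{R}^{d'}$ with $\|q_i-q_j\|=\|p_i-p_j\|$ for all $ij\in E$ satisfies $\|q_i-q_j\|=\|p_i-p_j\|$ for all $i,j\in V$. A $\Gamma$-gain graph on $\hat V$ is a set of triples $(u,v,\gamma)\in\hat V\times\hat V\times\Gamma$ up to $(u,v,\gamma)\sim(v,u,\gamma^{-1})$; its lift is the graph on $\Gamma\times\hat V$ with $\{(\alpha,u),(\beta,v)\}$ an edge iff $(u,v,\alpha^{-1}\beta)$ is in the gain graph. $p$ is compatible with $\theta$ if $\theta(\gamma)p_{(\alpha,v)}=p_{(\gamma\alpha,v)}$ for all $\gamma,\alpha,v$; $\mathcal{C}_\theta(V)$ is the set of compatible configurations with $\sum_{i\in V}p_i=\mathbf{0}$.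 $(G,p)$ is $\theta$-symmetric if $G$ is the lift of a $\Gamma$-gain graph and $p$ is compatible with $\theta$. $P$ is the $d\times|V|$ matrix with columns $p_i$, $P^\top P$ its Gram matrix. $F_{ij}=(\mathbf{e}_i-\mathbf{e}_j)(\mathbf{e}_i-\mathbf{e}_j)^\top$ and $F_{(u,v,\gamma)}=\sum_{\alpha\in\Gamma}F_{(\alpha,u)(\alpha\gamma,v)}$. $(\mathcal{L}^V)^\Gamma_+$ is the set of positive semidefinite symmetric $V\times V$ matrices $L$ with $L\mathbf{1}_V=\mathbf{0}$ and $L[(\alpha,u),(\beta,v)]=L[(\gamma\alpha,u),(\gamma\beta,v)]$ for all $\alpha,\beta,\gamma\in\Gamma$, $u,v\in\hat V$. $\langle A,B\rangle=\operatorname{tr}(AB)$. *)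

(* Defs.v *)
From HB Require Import structures.
From mathcomp Require Import all_boot all_order all_algebra all_fingroup.
From mathcomp Require Import reals.
Set Implicit Arguments. Unset Strict Implicit. Unset Printing Implicit Defensive.
Import Order.TTheory GRing.Theory Num.Theory.
Local Open Scope ring_scope.

Section Defs.
Variable R : realType.

Definition edist (k : nat) (x y : 'cV[R]_k) : R :=
  Num.sqrt (\sum_(i < k) (x i 0 - y i 0) ^+ 2).

Definition orthogonal_mx (d : nat) (A : 'M[R]_d) : Prop := A *m A^T = 1%:M.

Definition point_group (gT : finGroupType) (d : nat) (theta : gT -> 'M[R]_d) : Prop :=
  [/\ theta 1%g = 1%:M,
      (forall a b : gT, theta (a * b)%g = theta a *m theta b) &
      (forall a : gT, orthogonal_mx (theta a))].

Definition universally_rigid (V : finType) (d : nat) (adj : rel V)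
    (p : V -> 'cV[R]_d) : Prop :=
  forall d' : nat, (d <= d')%N -> forall q : V -> 'cV[R]_d',
    (forall i j, adj i j -> edist (q i) (q j) = edist (p i) (p j)) ->
    forall i j : V, edist (q i) (q j) = edist (p i) (p j).

Definition gain_equiv (gT : finGroupType) (Vh : finType)
    (e f : Vh * Vh * gT) : bool :=
  let: (u, v, g) := e in let: (u', v', g') := f in
  [&& u == u', v == v' & g == g'] || [&& u == v', v == u' & g == (g'^-1)%g].

Definition lift_adj (gT : finGroupType) (Vh : finType)
    (E : {set Vh * Vh * gT}) : rel (gT * Vh) :=
  fun x y => [exists e in E, gain_equiv e (x.2, y.2, (x.1^-1 * y.1)%g)].

Definition compatible (gT : finGroupType) (Vh : finType) (d : nat)
    (theta : gT -> 'M[R]_d) (p : gT * Vh -> 'cV[R]_d) : Prop :=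
  forall (g a : gT) (v : Vh), theta g *m p (a, v) = p ((g * a)%g, v).

Definition in_C_theta (gT : finGroupType) (Vh : finType) (d : nat)
    (theta : gT -> 'M[R]_d) (p : gT * Vh -> 'cV[R]_d) : Prop :=
  compatible theta p /\ \sum_(i : gT * Vh) p i = 0.

Definition config_mx (V : finType) (d : nat) (p : V -> 'cV[R]_d) : 'M[R]_(d, #|V|) :=
  \matrix_(k < d, i < #|V|) p (enum_val i) k 0.

Definition gram_mx (V : finType) (d : nat) (p : V -> 'cV[R]_d) : 'M[R]_#|V| :=
  (config_mx p)^T *m config_mx p.

Definition basis_vec (V : finType) (i : V) : 'cV[R]_#|V| := delta_mx (enum_rank i) 0.

Definition F_pair (V : finType) (i j : V) : 'M[R]_#|V| :=
  (basis_vec i - basis_vec j) *m (basis_vec i - basis_vec j)^T.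

Definition F_gain (gT : finGroupType) (Vh : finType) (e : Vh * Vh * gT)
    : 'M[R]_#|{: gT * Vh}| :=
  let: (u, v, g) := e in \sum_(a : gT) F_pair (a, u) ((a * g)%g, v).

Definition mx_inner (n : nat) (A B : 'M[R]_n) : R := \tr (A *m B).

Definition psd_mx (n : nat) (A : 'M[R]_n) : Prop :=
  forall x : 'cV[R]_n, 0 <= (x^T *m A *m x) 0 0.

Definition in_LGamma_plus (gT : finGroupType) (Vh : finType)
    (L : 'M[R]_#|{: gT * Vh}|) : Prop :=
  [/\ L^T = L, psd_mx L, L *m (const_mx 1 : 'cV[R]_#|{: gT * Vh}|) = 0 &
      forall (a b g : gT) (u v : Vh),
        L (enum_rank (a, u)) (enum_rank (b, v)) =
        L (enum_rank ((g * a)%g, u)) (enum_rank ((g * b)%g, v))].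

End Defs.

(* Main.v *)
Require Import Defs.
From HB Require Import structures.
From mathcomp Require Import all_boot all_order all_algebra all_fingroup.
From mathcomp Require Import reals ring lra.
Set Implicit Arguments. Unset Strict Implicit. Unset Printing Implicit Defensive.
Import Order.TTheory GRing.Theory Num.Theory.
Local Open Scope ring_scope.

Section Helpers.
Variable R : realType.

Definition bform n (A : 'M[R]_n) (x y : 'cV[R]_n) : R := (x^T *m A *m y) 0 0.

Lemma bformDl n (A : 'M[R]_n) x y z : bform A (x + y) z = bform A x z + bform A y z.
Proof. by rewrite /bform linearD /= !mulmxDl mxE. Qed.
Lemma bformDr n (A : 'M[R]_n) x y z : bform A z (x + y) = bform A z x + bform A z y.
Proof. by rewrite /bform !mulmxDr mxE. Qed.
Lemma bformBl n (A : 'M[R]_n) x y z : bform A (x - y) z = bform A x z - bform A y z.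
Proof. by rewrite /bform linearB /= !mulmxBl !mxE. Qed.
Lemma bformBr n (A : 'M[R]_n) x y z : bform A z (x - y) = bform A z x - bform A z y.
Proof. by rewrite /bform !mulmxBr !mxE. Qed.
Lemma bformZl n (A : 'M[R]_n) t x z : bform A (t *: x) z = t * bform A x z.
Proof. by rewrite /bform linearZ /= -!scalemxAl mxE. Qed.
Lemma bformZr n (A : 'M[R]_n) t x z : bform A z (t *: x) = t * bform A z x.
Proof. by rewrite /bform -!scalemxAr mxE. Qed.
Lemma bformC n (A : 'M[R]_n) x y : A^T = A -> bform A x y = bform A y x.
Proof.
move=> sA; rewrite /bform.
have -> : (x^T *m A *m y) 0 0 = (x^T *m A *m y)^T 0 0 by rewrite [RHS]mxE.
by rewrite !trmx_mul trmxK sA mulmxA.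
Qed.
Lemma bform_delta n (A : 'M[R]_n) i j : bform A (delta_mx i 0) (delta_mx j 0) = A i j.
Proof. by rewrite /bform trmx_delta -rowE -colE !mxE. Qed.

Lemma bform_expand n (A : 'M[R]_n) x e t : A^T = A ->
  bform A (x + t *: e) (x + t *: e) =
  bform A x x + 2%:R * t * bform A x e + t ^+ 2 * bform A e e.
Proof.
move=> sA; rewrite !bformDl !bformDr !bformZl !bformZr (bformC e x sA).
by rewrite expr2; ring.
Qed.


Lemma psdE n (A : 'M[R]_n) : psd_mx A -> forall x, 0 <= bform A x x.
Proof. by []. Qed.

Lemma psd_diag_ge0 n (A : 'M[R]_n) k : psd_mx A -> 0 <= A k k.
Proof. by move=> pA; rewrite -bform_delta; apply: pA. Qed.

Lemma psd_diag0 n (A : 'M[R]_n) k j : A^T = A -> psd_mx A -> A k k = 0 -> A j k = 0.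
Proof.
move=> sA pA Akk; apply/eqP; apply/negPn/negP => ne.
set c := A j k; set b := A j j.
have := psdE pA (delta_mx j 0 + (- (b + 1) / (2%:R * c)) *: delta_mx k 0).
rewrite (bform_expand _ _ _ sA) !bform_delta Akk -/c -/b mulr0 addr0.
have -> : 2%:R * (- (b + 1) / (2%:R * c)) * c = - (b + 1).
  by field.
by rewrite opprD addrA subrr add0r; lra.
Qed.

Lemma psd_schur n (A : 'M[R]_n) k x : A^T = A -> psd_mx A -> 0 < A k k ->
  bform A x (delta_mx k 0) ^+ 2 <= bform A x x * A k k.
Proof.
move=> sA pA ha; set c := bform A x (delta_mx k 0); set a := A k k.
have := psdE pA (x + (- c / a) *: delta_mx k 0).
rewrite (bform_expand _ _ _ sA) bform_delta -/c -/a.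
have -> : bform A x x + 2%:R * (- c / a) * c + (- c / a) ^+ 2 * a =
          (bform A x x * a - c ^+ 2) / a.
  by field; rewrite gt_eqF.
by rewrite pmulr_lge0 ?invr_gt0 // subr_ge0.
Qed.


Lemma psd_factor n (A : 'M[R]_n) : A^T = A -> psd_mx A ->
  exists m (Q : 'M[R]_(m, n)), A = Q^T *m Q.
Proof.
move=> sA pA.
have [c] := ubnP #|[set i | A i i != 0]|.
elim: c A sA pA => // c IH A sA pA Hc.
have symA i j : A j i = A i j.
  by rewrite -[in LHS]sA mxE.
case: (pickP (fun i => A i i != 0)) => [k Hk | H0]; last first.
  exists 0%N, 0; apply/matrixP => i j; rewrite mulmx0 mxE.
  apply: (@psd_diag0 _ _ j i sA pA); apply/eqP; have := H0 j; by move/negbFE.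
have ha : 0 < A k k by rewrite lt_def Hk psd_diag_ge0.
set a := A k k in ha.
set s := Num.sqrt a.
have s2 : s^-1 * s^-1 = a^-1 by rewrite -invfM -expr2 sqr_sqrtr // ltW.
set v : 'cV[R]_n := s^-1 *: col k A.
set A' := A - v *m v^T.
have A'E i j : A' i j = A i j - A i k * A j k / a.
  rewrite !mxE big_ord1 !mxE; congr (_ - _).
  by rewrite -s2; ring.
have sA' : A'^T = A'.
  by apply/matrixP => i j; rewrite mxE !A'E (symA i j); ring.
have pA' : psd_mx A'.
  move=> x; rewrite -/(bform A' x x) /A' /bform mulmxBr mulmxBl mxE.
  rewrite [X in _ + X]mxE.
  have -> : x^T *m (v *m v^T) *m x = (x^T *m v) *m (v^T *m x) by rewrite !mulmxA.
  set cx := bform A x (delta_mx k 0).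
  have xv : (x^T *m v) 0 0 = s^-1 * cx.
    by rewrite /v -scalemxAr mxE colE mulmxA.
  have vx : (v^T *m x) 0 0 = s^-1 * cx.
    rewrite -xv.
    have -> : (v^T *m x) = (x^T *m v)^T by rewrite trmx_mul trmxK.
    by rewrite mxE.
  rewrite [X in _ - X]mxE big_ord1 xv vx -/(bform A x x).
  have := psd_schur x sA pA ha; rewrite -/cx -/a => h.
  have -> : s^-1 * cx * (s^-1 * cx) = cx ^+ 2 / a.
    by rewrite -s2; ring.
  rewrite subr_ge0 ler_pdivrMr //.
have Hprop : [set i | A' i i != 0] \proper [set i | A i i != 0].
  apply/properP; split.
    apply/subsetP => i; rewrite !inE; apply: contraNN => /eqP Aii.
    rewrite A'E (symA k i) -/a.
    have -> : A k i = 0 by apply: (@psd_diag0 _ _ i k sA pA).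
    by rewrite Aii !mul0r subr0.
  exists k; first by rewrite inE.
  rewrite inE A'E -/a negbK; apply/eqP; field; by rewrite gt_eqF.
have [m [Q HQ]] := IH A' sA' pA' (leq_trans (proper_card Hprop) Hc).
exists (1 + m)%N, (col_mx v^T Q).
rewrite tr_col_mx mul_row_col trmxK -HQ /A'.
by rewrite addrC subrK.
Qed.


Lemma centered_zero n (Z : 'M[R]_n) : Z^T = Z -> Z *m (const_mx 1 : 'cV[R]_n) = 0 ->
  (forall a b, Z a a + Z b b - Z a b - Z b a = 0) -> Z = 0.
Proof.
move=> sZ Z1 hq.
have symZ i j : Z j i = Z i j by rewrite -[in LHS]sZ mxE.
have rs i : \sum_j Z i j = 0.
  have := congr1 (fun M : 'cV[R]_n => M i 0) Z1; rewrite !mxE => h; rewrite -[RHS]h.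
  by apply: eq_bigr => j _; rewrite mxE mulr1.
have h1 a b : Z a b = (Z a a + Z b b) / 2%:R.
  have := hq a b; rewrite (symZ a b) => h; apply/eqP; rewrite eq_sym.
  rewrite -subr_eq0; apply/eqP; rewrite -[RHS](mul0r (2%:R^-1 : R)) -h; by field.
set N : R := n%:R.
set s := \sum_b Z b b.
have h2 a : Z a a * N + s = 0.
  have := rs a; under eq_bigr => b _ do rewrite h1.
  rewrite -mulr_suml big_split /= sumr_const card_ord -/s => h.
  have := congr1 (fun t => t * 2%:R) h; rewrite mul0r => <-.
  by rewrite /N -mulr_natr; field.
have hs : s * N + s * N = 0.
  have : \sum_a (Z a a * N + s) = 0 by rewrite big1.
  by rewrite big_split /= -mulr_suml sumr_const card_ord -/s -mulr_natr.
apply/matrixP => a0 b0.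
have n_gt0 : (0 < n)%N by apply: leq_ltn_trans (ltn_ord a0).
have NZ : N != 0 by rewrite /N pnatr_eq0 -lt0n.
have s0 : s = 0.
  apply/eqP; have : (s * N) * 2%:R == 0 by rewrite mulr_natr mulr2n hs.
  by rewrite !mulf_eq0 (negbTE NZ) orbF; case/orP => //; rewrite pnatr_eq0.
have d0 a : Z a a = 0.
  apply/eqP; have := h2 a; rewrite s0 addr0 => /eqP; rewrite mulf_eq0 (negbTE NZ) orbF.
  by [].
by rewrite h1 !d0 mxE; ring.
Qed.

End Helpers.
Section VLemmas.
Variable R : realType.

Lemma edistE k (x y : 'cV[R]_k) : edist x y = Num.sqrt (((x - y)^T *m (x - y)) 0 0).
Proof.
rewrite /edist mxE; congr Num.sqrt; apply: eq_bigr => i _.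
by rewrite !mxE expr2.
Qed.

Lemma sq_ge0 k (u : 'cV[R]_k) : 0 <= (u^T *m u) 0 0.
Proof.
rewrite mxE; apply: sumr_ge0 => i _; rewrite mxE -expr2; exact: sqr_ge0.
Qed.

Variable V : finType.

Definition quad (A : 'M[R]_#|V|) (i j : V) :=
  bform A (basis_vec R i - basis_vec R j) (basis_vec R i - basis_vec R j).

Lemma quadE A i j : quad A i j =
  A (enum_rank i) (enum_rank i) + A (enum_rank j) (enum_rank j)
  - A (enum_rank i) (enum_rank j) - A (enum_rank j) (enum_rank i).
Proof.
rewrite /quad !bformBl !bformBr /basis_vec !bform_delta; ring.
Qed.

Lemma quad_sym A i j : quad A i j = quad A j i.
Proof. rewrite !quadE; ring. Qed.

Lemma quad_ge0 A i j : psd_mx A -> 0 <= quad A i j.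
Proof. by move=> pA; apply: pA. Qed.

Lemma inner_F_pair A i j : mx_inner A (F_pair R i j) = quad A i j.
Proof.
rewrite /mx_inner /F_pair mulmxA mxtrace_mulC /quad /bform mulmxA.
by rewrite /mxtrace big_ord1.
Qed.

Lemma edist_Q m (Q : 'M[R]_(m, #|V|)) i j :
  edist (Q *m basis_vec R i) (Q *m basis_vec R j) = Num.sqrt (quad (Q^T *m Q) i j).
Proof.
rewrite edistE -mulmxBr trmx_mul /quad /bform; congr Num.sqrt.
by rewrite !mulmxA.
Qed.

Lemma edist_pad m d (Q : 'M[R]_(m, #|V|)) i j :
  edist (col_mx (Q *m basis_vec R i) (0 : 'cV[R]_d))
        (col_mx (Q *m basis_vec R j) (0 : 'cV[R]_d))
  = Num.sqrt (quad (Q^T *m Q) i j).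
Proof.
rewrite -edist_Q !edistE opp_col_mx add_col_mx subr0 tr_col_mx mul_row_col.
by rewrite mulmx0 addr0.
Qed.

Lemma config_col d (p : V -> 'cV[R]_d) i : p i = config_mx p *m basis_vec R i.
Proof.
rewrite /basis_vec -colE; apply/matrixP => k l.
by rewrite !mxE enum_rankK (ord1 l).
Qed.

Lemma gram_entry d (p : V -> 'cV[R]_d) i j :
  gram_mx p (enum_rank i) (enum_rank j) = ((p i)^T *m p j) 0 0.
Proof.
rewrite /gram_mx !mxE; apply: eq_bigr => k _; by rewrite !mxE !enum_rankK.
Qed.

Lemma gram_psd d (p : V -> 'cV[R]_d) : psd_mx (gram_mx p).
Proof.
move=> x; rewrite /gram_mx !mulmxA -trmx_mul -mulmxA; exact: sq_ge0.
Qed.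

Lemma gram_sym d (p : V -> 'cV[R]_d) : (gram_mx p)^T = gram_mx p.
Proof. by rewrite /gram_mx trmx_mul trmxK. Qed.

Lemma edist_gram d (p : V -> 'cV[R]_d) i j :
  edist (p i) (p j) = Num.sqrt (quad (gram_mx p) i j).
Proof. by rewrite (config_col p i) (config_col p j) edist_Q. Qed.

End VLemmas.

Lemma quad_inv (R : realType) (gT : finGroupType) (Vh : finType)
  (A : 'M[R]_#|{: gT * Vh}|) :
  (forall (a b g : gT) (u v : Vh),
        A (enum_rank (a, u)) (enum_rank (b, v)) =
        A (enum_rank ((g * a)%g, u)) (enum_rank ((g * b)%g, v))) ->
  forall g a b u v, quad A (a, u) (b, v) = quad A ((g * a)%g, u) ((g * b)%g, v).
Proof.
move=> hA g a b u v.
by rewrite !quadE (hA a a g) (hA b b g) (hA a b g) (hA b a g).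
Qed.

Lemma gain_sum (R : realType) (gT : finGroupType) (Vh : finType)
  (A : 'M[R]_#|{: gT * Vh}|) :
  (forall (a b g : gT) (u v : Vh),
        A (enum_rank (a, u)) (enum_rank (b, v)) =
        A (enum_rank ((g * a)%g, u)) (enum_rank ((g * b)%g, v))) ->
  forall u v g, mx_inner A (F_gain R (u, v, g)) = quad A (1%g, u) (g, v) *+ #|gT|.
Proof.
move=> hA u v g.
transitivity (\sum_(a : gT) mx_inner A (F_pair R (a, u) ((a * g)%g, v))).
  by rewrite /mx_inner /F_gain mulmx_sumr raddf_sum.
rewrite -sumr_const; apply: eq_bigr => a _.
by rewrite inner_F_pair (quad_inv hA a^-1) mulVg mulKg.
Qed.

Unset Implicit Arguments.

Theorem proposition4p3 (R : realType) (gT : finGroupType) (Vh : finType)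
    (d : nat) (theta : gT -> 'M[R]_d) (E : {set Vh * Vh * gT})
    (p : gT * Vh -> 'cV[R]_d) :
  point_group theta ->
  (forall u : Vh, (u, u, 1%g) \notin E) ->
  in_C_theta theta p ->
  universally_rigid (lift_adj E) p ->
  in_LGamma_plus (gram_mx p) /\
  (forall X : 'M[R]_#|{: gT * Vh}|,
     in_LGamma_plus X ->
     (forall e, e \in E -> mx_inner X (F_gain R e) = mx_inner (gram_mx p) (F_gain R e)) ->
     X = gram_mx p).
Proof.
move=> [th1 thM thO] _ [comp psum] UR.
set G := gram_mx p.
have G1 : G *m (const_mx 1 : 'cV[R]_#|{: gT * Vh}|) = 0.
  rewrite /G /gram_mx -mulmxA.
  have -> : config_mx p *m (const_mx 1 : 'cV[R]_#|{: gT * Vh}|) = 0.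
    apply/matrixP => k l; rewrite !mxE.
    have := congr1 (fun M : 'cV[R]_d => M k 0) psum.
    rewrite summxE mxE => h; rewrite -[RHS]h.
    rewrite [RHS](reindex (@enum_val _ {: gT * Vh})) /=; last by apply: onW_bij; exact: enum_val_bij.
    by apply: eq_bigr => i _; rewrite !mxE mulr1.
  by rewrite mulmx0.
have invG : forall (a b g : gT) (u v : Vh),
    G (enum_rank (a, u)) (enum_rank (b, v)) =
    G (enum_rank ((g * a)%g, u)) (enum_rank ((g * b)%g, v)).
  move=> a b g u v; rewrite /G !gram_entry -!comp trmx_mul.
  rewrite mulmxA -(mulmxA _ _ (theta g)) (mulmx1C (thO g)) mulmx1 //.
have LG : in_LGamma_plus G by split; [exact: gram_sym | exact: gram_psd | exact: G1 | exact: invG].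
split => // X [sX pX X1 invX] hE.
have [m [Q HQ]] := psd_factor sX pX.
have NgT : (0 < #|gT|)%N by apply/card_gt0P; exists 1%g.
have hedge u v g : (u, v, g) \in E -> quad X (1%g, u) (g, v) = quad G (1%g, u) (g, v).
  move=> He; have := hE _ He; rewrite (gain_sum invX) (gain_sum invG).
  exact: pmulrnI.
have adjq x y : lift_adj E x y -> quad X x y = quad G x y.
  case: x => a u; case: y => b v.
  move=> /existsP [[[u' v'] g]] /andP [He] /= /orP [/and3P [/eqP eu /eqP ev /eqP eg] | /and3P [/eqP eu /eqP ev /eqP eg]].
    subst; rewrite (quad_inv invX a^-1) (quad_inv invG a^-1) mulVg.
    exact: hedge.
  subst; rewrite quad_sym [quad G _ _]quad_sym.
  rewrite (quad_inv invX b^-1) (quad_inv invG b^-1) mulVg.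
  by move: He; rewrite invMg invgK => He; apply: hedge.
have hall := UR (m + d)%N (leq_addl m d)
  (fun i => col_mx (Q *m basis_vec R i) (0 : 'cV[R]_d)).
have hp : forall i j, lift_adj E i j ->
    edist (col_mx (Q *m basis_vec R i) (0 : 'cV[R]_d))
          (col_mx (Q *m basis_vec R j) (0 : 'cV[R]_d)) = edist (p i) (p j).
  move=> i j hij; rewrite edist_pad -HQ edist_gram -/G (adjq _ _ hij) //.
have hq i j : quad X i j = quad G i j.
  have := hall hp i j; rewrite /= edist_pad -HQ edist_gram -/G => hs.
  rewrite -(sqr_sqrtr (@quad_ge0 R _ X i j pX)) hs sqr_sqrtr //.
  exact: (@quad_ge0 R _ G i j (gram_psd p)).
apply/eqP; rewrite -subr_eq0; apply/eqP; apply: centered_zero.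
- by rewrite linearB /= sX /G gram_sym.
- by rewrite mulmxBl X1 G1 subr0.
move=> a b; have := hq (enum_val a) (enum_val b).
rewrite !quadE !enum_valK /G /gram_mx !mxE; lra.
Qed.
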